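(* Let $T$ be a countable tree with at least one vertex of infinite degree, and let $H$ be a countable graph in which every vertex has infinite degree. Then for every $v\in V(H)$, $H$ contains a subgraph isomorphic to $T$ whose vertex set contains $N_H(v)$.
   Context: $N_H(v)$ denotes the set of neighbors of $v$ in $H$. *)

(* Defs.v *)
From mathcomp Require Import all_boot.
From mathcomp Require Import boolp classical_sets functions cardinality.
From Stdlib Require Import List.
Set Implicit Arguments. Unset Strict Implicit. Unset Printing Implicit Defensive.
Local Open Scope classical_set_scope.

Definition simple_graph (V : Type) (adj : V -> V -> Prop) : Prop :=
  (forall x y, adj x y -> adj y x) /\ (forall x, ~ adj x x).

Fixpoint walk (V : Type) (adj : V -> V -> Prop) (x : V) (s : list V) : Prop :=
  match s with
  | nil => True
  | y :: s' => adj x y /\ walk adj y s'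
  end.

Definition connected_graph (V : Type) (adj : V -> V -> Prop) : Prop :=
  forall x y : V, exists s : list V, walk adj x s /\ List.last s x = y.

Definition has_cycle (V : Type) (adj : V -> V -> Prop) : Prop :=
  exists (x : V) (s : list V),
    2 <= length s /\ NoDup (x :: s) /\ walk adj x s /\ adj (List.last s x) x.

Definition is_tree (V : Type) (adj : V -> V -> Prop) : Prop :=
  simple_graph adj /\ connected_graph adj /\ ~ has_cycle adj.

Definition nbhd (V : Type) (adj : V -> V -> Prop) (v : V) : set V := [set u | adj v u].

Definition infinite_degree (V : Type) (adj : V -> V -> Prop) (v : V) : Prop :=
  infinite_set (nbhd adj v).

(* H contains a subgraph isomorphic to T whose vertex set contains N_H(v):
   an injective, edge-preserving map f : V(T) -> V(H) whose image contains N_H(v). *)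
Definition tree_embedding_covering (VT VH : Type) (eT : VT -> VT -> Prop)
    (eH : VH -> VH -> Prop) (f : VT -> VH) (v : VH) : Prop :=
  injective f /\ (forall x y, eT x y -> eH (f x) (f y)) /\ nbhd eH v `<=` range f.

(* Main.v *)
Require Import Defs.
From mathcomp Require Import all_boot.
From mathcomp Require Import boolp classical_sets functions cardinality.
From Stdlib Require Import List.
From mathcomp Require Import zify.
Set Implicit Arguments. Unset Strict Implicit.
Section Walks.
Variable V : Type.
Variable adj : V -> V -> Prop.

Lemma last_indep (a : V) l d d' : List.last (a :: l) d = List.last (a :: l) d'.
Proof. elim: l a => [|b l IH] a //; exact: (IH b). Qed.

Lemma last_cons (a : V) l d : List.last (a :: l) d = List.last l a.
Proof. by case: l => [|b l] //; apply: last_indep. Qed.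


Lemma last_app (l1 l2 : list V) d :
  List.last (app l1 l2) d = List.last l2 (List.last l1 d).
Proof.
elim: l1 d => [|a l1 IH] d //.
by change (List.last (a :: (app l1 l2)) d = List.last l2 (List.last (a :: l1) d)); rewrite !last_cons IH.
Qed.

Lemma walk_app x (s1 s2 : list V) :
  walk adj x (app s1 s2) <-> walk adj x s1 /\ walk adj (List.last s1 x) s2.
Proof.
elim: s1 x => [|a s1 IH] x; first by simpl; tauto.
change (adj x a /\ walk adj a (app s1 s2) <-> (adj x a /\ walk adj a s1) /\ walk adj (List.last (a :: s1) x) s2).
rewrite IH last_cons; tauto.
Qed.

Lemma walk_rev (sym : forall x y, adj x y -> adj y x) (s : list V) a b :
  walk adj a (app s [:: b]) -> walk adj b (app (List.rev s) [:: a]).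
Proof.
elim: s a => [|c s IH] a /=; first by move=> [h _]; split => //; apply: sym.
move=> [h1 h2]; change (walk adj b (app (app (List.rev s) [:: c]) [:: a])); apply/walk_app; split; first exact: IH.
rewrite last_app /=; split => //; exact: sym.
Qed.

Lemma walk_join (sym : forall x y, adj x y -> adj y x) a s1 s2 :
  walk adj a s1 -> walk adj a s2 ->
  exists s, walk adj (List.last s1 a) s /\ List.last s (List.last s1 a) = List.last s2 a /\
    (forall w, In w s -> In w s1 \/ w = a \/ In w s2).
Proof.
move=> w1 w2; have [->|ne] := pselect (s1 = nil).
  by exists s2; split => //; split => // w; simpl; tauto.
have [s' [b E]] := exists_last ne.
subst s1; rewrite last_last.
exists (app (List.rev s') (app [:: a] s2)); split.
  rewrite app_assoc; apply/walk_app; split; first exact: walk_rev.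
  by rewrite last_last.
split; first by rewrite app_assoc last_app last_last.
move=> w; rewrite !in_app_iff -List.in_rev /=.
move=> [h|[[h|[]]|h]]; [left; left|right; left|right; right] => //.
Qed.

Lemma walk_nodup a s : walk adj a s -> exists r, walk adj a r /\
  List.last r a = List.last s a /\ NoDup (a :: r) /\ incl r s.
Proof.
elim: s a => [|y s IH] a.
  by move=> _; exists nil; split => //; split => //; split; [constructor; [by []|constructor]| by []].
move=> [hay /IH [r [wr [lr [nd inc]]]]].
rewrite last_cons.
have [ain|anin] := pselect (In a (y :: r)).
  case: ain => [ya|].
    subst y; exists r; split => //; split => //; split => //.
    by move=> w /inc; right.
  move=> h0; have [r1 [r2 E]] := List.in_split _ _ h0; subst r.
  exists r2; move: wr => /walk_app [_ /= [_ w2]]; split => //.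
  split; first by rewrite -lr last_app last_cons.
  split.
    by move: nd; rewrite app_comm_cons => /NoDup_app_remove_l.
  by move=> w h; right; apply: inc; rewrite in_app_iff /=; tauto.
exists (y :: r); split => //; split; first by rewrite last_cons.
split; first by constructor.
by move=> w [->|/inc h]; [left|right].
Qed.

End Walks.
Local Open Scope classical_set_scope.
Lemma ex_min (P : nat -> Prop) : (exists n, P n) -> exists n, P n /\ forall m, P m -> n <= m.
Proof.
move=> [n Pn]; apply: contrapT => H.
suff: forall k m, m <= k -> ~ P m by move/(_ n n (leqnn n)).
elim=> [|k IH] m.
  rewrite leqn0 => /eqP -> P0; apply: H; exists 0; split => // m' _; exact: leq0n.
rewrite leq_eqVlt => /orP [/eqP ->|]; last by rewrite ltnS; apply: IH.
move=> Pk; apply: H; exists k.+1; split => // m' Pm'.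
case: (leqP m' k) => // hm; exfalso; exact: (IH m' hm).
Qed.

Section Tree.
Variable VT : Type.
Variable eT : VT -> VT -> Prop.
Variable t : VT.
Hypothesis hsym : forall x y, eT x y -> eT y x.
Hypothesis hirr : forall x, ~ eT x x.
Hypothesis hnocyc : ~ has_cycle eT.

Definition reach n x := exists s, walk eT t s /\ List.last s t = x /\ length s = n.

Variable d : VT -> nat.
Hypothesis hd : forall x, reach (d x) x /\ forall m, reach m x -> d x <= m.
Variable p : VT -> VT.
Hypothesis hp : forall x, x <> t -> eT (p x) x /\ (d (p x)).+1 = d x.

Lemma d0 x : d x = 0 -> x = t.
Proof.
move=> h; have [[s [_ [ls len]]] _] := hd x; rewrite h in len.
by case: s ls len.
Qed.

Lemma dt : d t = 0.
Proof.
have [_ m] := hd t; apply/eqP; rewrite -leqn0; apply: m; by exists nil.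
Qed.

Lemma dadj x y : eT x y -> d y <= (d x).+1.
Proof.
move=> hxy; have [[s [ws [ls len]]] _] := hd x; have [_ m] := hd y.
apply: m; exists (app s [:: y]); split.
  by apply/walk_app; split => //=; rewrite ls.
rewrite last_last length_app len /=; split => //; lia.
Qed.

Lemma on_short s z w : walk eT t s -> List.last s t = z -> length s = d z ->
  In w s -> w = z \/ d w < d z.
Proof.
move=> ws ls len hin; have [s1 [s2 E]] := List.in_split _ _ hin; subst s.
have [_ m] := hd w.
have hw : d w <= (length s1).+1.
  apply: m; exists (app s1 [:: w]); split.
    by move: ws => /walk_app [h1 /= [h2 _]]; apply/walk_app; split.
  rewrite last_last length_app /=; split => //; lia.
clear hin; case: s2 ws ls len => [|b s2] ws ls len.
  by left; rewrite -ls last_app.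
right; rewrite -len length_app /=; lia.
Qed.

Lemma keyK x y : eT x y -> d y <= d x -> x <> t /\ y = p x.
Proof.
move=> hxy hle.
have xt : x <> t.
  move=> E; subst x; rewrite dt leqn0 in hle; move/eqP: hle => /d0 E.
  by subst y; exact: (@hirr _ hxy).
split => //; apply: contrapT => yq; have [hq dq] := hp xt.
move: (p x) hq dq yq => q hq dq yq; apply: hnocyc.
have [[sq [wq [lq nq]]] _] := hd q; have [[sy [wy [ly ny]]] _] := hd y.
have [s [ws [ls ins]]] := walk_join hsym wq wy.
rewrite lq ly in ws ls.
have [r [wr [lr [nd inc]]]] := walk_nodup ws.
have notx : forall w, In w (q :: r) -> w <> x.
  move=> w hw E; subst w.
  case: hw => [E|/inc /ins [h|[h|h]]].
    by rewrite E in hq; exact: (@hirr x hq).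
  - have := on_short wq lq nq h; case=> [E|]; first by rewrite -E in hq; exact: (@hirr x hq).
    lia.
  - by apply: xt.
  - have := on_short wy ly ny h; case=> [E|]; first by rewrite -E in hxy; exact: (@hirr x hxy).
    lia.
exists x, (q :: r); split.
  case: r wr lr nd inc notx => [|b r] /=; last by lia.
  by move=> _ lr; exfalso; apply: yq; rewrite -ls -lr.
split; first by constructor => //; move=> /notx.
split; first by split => //; apply: hsym.
by rewrite last_cons lr ls; apply: hsym.
Qed.

Lemma TP x y : eT x y -> (x <> t /\ y = p x) \/ (y <> t /\ x = p y).
Proof.
move=> hxy; case: (leqP (d y) (d x)) => h; first by left; apply: keyK.
by right; apply: keyK; [apply: hsym| apply: ltnW].
Qed.

Lemma par_ex x : x <> t -> exists y, eT y x /\ (d y).+1 = d x.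
Proof.
move=> xt; have [[s [ws [ls len]]] _] := hd x.
have ne : s <> nil by move=> E; subst s; apply: xt.
have [s' [b E]] := exists_last ne; subst s.
rewrite last_last in ls; subst b.
move: ws => /walk_app [w1 /= [h _]].
exists (List.last s' t); split => //.
have := dadj h; have [_ m] := hd (List.last s' t).
have : d (List.last s' t) <= length s' by apply: m; exists s'.
rewrite -len length_app /=; lia.
Qed.

End Tree.
Lemma pick_out T (A B : set T) : infinite_set A -> finite_set B -> exists a, A a /\ ~ B a.
Proof.
move=> iA fB; apply: contrapT => H; apply: iA; apply: (sub_finite_set _ fB).
move=> a Aa; apply: contrapT => nB; apply: H; by exists a.
Qed.

Section Constr.
Variables (VT VH : Type) (eT : VT -> VT -> Prop) (eH : VH -> VH -> Prop).
Variables (t : VT) (v : VH) (p : VT -> VT).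
Hypothesis TP : forall x y, eT x y -> (x <> t /\ y = p x) \/ (y <> t /\ x = p y).
Hypothesis hHsym : forall x y, eH x y -> eH y x.
Hypothesis hHinf : forall u, infinite_degree eH u.
Hypothesis hTinf : infinite_degree eT t.

Definition state := (set VT * (VT -> VH))%type.

Definition inv (st : state) : Prop :=
  finite_set st.1 /\ st.1 t /\ st.2 t = v /\
  (forall x, st.1 x -> x <> t -> st.1 (p x) /\ eH (st.2 (p x)) (st.2 x)) /\
  (forall x y, st.1 x -> st.1 y -> st.2 x = st.2 y -> x = y).

Definition ext (st st' : state) : Prop :=
  st.1 `<=` st'.1 /\ forall x, st.1 x -> st'.2 x = st.2 x.

Lemma ext_refl st : ext st st.
Proof. by split. Qed.

Lemma ext_trans a b c : ext a b -> ext b c -> ext a c.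
Proof.
move=> [s1 e1] [s2 e2]; split; first by move=> x /s1 /s2.
by move=> x h; rewrite e2 ?e1 //; apply: s1.
Qed.

Definition upd (f : VT -> VH) x u := fun y => if pselect (y = x) then u else f y.

Lemma add_ok (st : state) x u : inv st -> ~ st.1 x -> x <> t -> st.1 (p x) ->
  ~ (st.2 @` st.1) u -> eH (st.2 (p x)) u ->
  inv (st.1 `|` [set x], upd st.2 x u) /\ ext st (st.1 `|` [set x], upd st.2 x u).
Proof.
case: st => S f /= [fS [St [ft [cl inj]]]] nSx xt Spx nu e.
have ag : forall y, S y -> upd f x u y = f y.
  by move=> y Sy; rewrite /upd; case: pselect => // E; subst y.
have ux : upd f x u x = u by rewrite /upd; case: pselect.
split; last by split; [move=> y Sy; left | move=> y Sy /=; apply: ag].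
split; first by rewrite /= finite_setU; split.
split; first by left.
split; first by rewrite /= ag.
split.
  move=> y [Sy|->] yt /=.
    by have [h1 h2] := cl y Sy yt; split; [left|rewrite !ag].
  by split; [left|rewrite ux ag].
move=> y z /= [Sy|->] [Sz|->]; rewrite ?ux ?ag //.
- by move=> E; apply: inj.
- by move=> E; exfalso; apply: nu; exists y.
- by move=> E; exfalso; apply: nu; exists z.
Qed.

Variable d : VT -> nat.
Hypothesis hpd : forall x, x <> t -> (d (p x)).+1 = d x.
Hypothesis hd0 : forall x, d x = 0 -> x = t.
Hypothesis hdt : d t = 0.

Lemma ext_one n : forall x, d x = n -> forall st, inv st ->
  exists st', inv st' /\ ext st st' /\ st'.1 x.
Proof.
elim: n => [|n IH] x dx st ist.
  have -> := hd0 dx; exists st; split => //; split; [exact: ext_refl|by case: ist => _ []].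
have xt : x <> t by move=> E; subst x; rewrite hdt in dx.
have dpx : d (p x) = n by have := hpd xt; rewrite dx => -[].
have [st1 [i1 [e1 s1]]] := IH _ dpx _ ist.
have [Sx|nSx] := pselect (st1.1 x).
  by exists st1.
have fin1 : finite_set (st1.2 @` st1.1) by apply: finite_image; case: i1.
have [u [hu nu]] := pick_out (@hHinf (st1.2 (p x))) fin1.
have [i2 e2] := add_ok i1 nSx xt s1 nu hu.
exists (st1.1 `|` [set x], upd st1.2 x u); split => //; split; first exact: ext_trans e2.
by right.
Qed.

Lemma cover st w : inv st -> eH v w ->
  exists st', inv st' /\ ext st st' /\ (st'.2 @` st'.1) w.
Proof.
move=> ist hw.
have [iw|niw] := pselect ((st.2 @` st.1) w).
  by exists st; split => //; split => //; exact: ext_refl.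
have [s [hs nSs]] := pick_out hTinf (proj1 ist).
have [[tt _]|[st' ps]] := TP hs; first by [].
have Sps : st.1 (p s) by rewrite -ps; case: ist => _ [].
have hw' : eH (st.2 (p s)) w by rewrite -ps; case: ist => _ [_ [-> _]].
have [i2 e2] := add_ok ist nSs st' Sps niw hw'.
exists (st.1 `|` [set s], upd st.2 s w); split => //; split => //.
by exists s => /=; [right|rewrite /upd; case: pselect].
Qed.

Variables (g : nat -> VT) (gh : nat -> VH).

Lemma step_ex (st : state) (n : nat) : exists st' : state, inv st -> inv st' /\ ext st st' /\
  st'.1 (g n) /\ (eH v (gh n) -> (st'.2 @` st'.1) (gh n)).
Proof.
case: (pselect (inv st)) => ist; last by exists st.
have [st1 [i1 [e1 s1]]] := ext_one (erefl (d (g n))) ist.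
case: (pselect (eH v (gh n))) => hw.
  have [st2 [i2 [e2 c2]]] := cover i1 hw.
  exists st2 => _; split => //; split; first exact: ext_trans e2.
  by split => //; apply: (proj1 e2).
by exists st1.
Qed.

Variable F : state -> nat -> state.
Hypothesis hF : forall st n, inv st -> inv (F st n) /\ ext st (F st n) /\
  (F st n).1 (g n) /\ (eH v (gh n) -> ((F st n).2 @` (F st n).1) (gh n)).
Hypothesis hg : forall x, exists n, g n = x.
Hypothesis hgh : forall w, exists n, gh n = w.

Fixpoint stn n : state := match n with 0 => ([set t], fun _ => v) | m.+1 => F (stn m) m end.

Lemma inv_stn n : inv (stn n).
Proof.
elim: n => [|n IH] /=; last by case: (hF n IH).
split; first exact: finite_set1.
split; first by [].
split; first by [].
split; first by move=> x /= -> [].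
by move=> x y /= -> ->.
Qed.

Lemma ext_stn m n : m <= n -> ext (stn m) (stn n).
Proof.
elim: n => [|n IH]; first by rewrite leqn0 => /eqP ->; exact: ext_refl.
rewrite leq_eqVlt => /orP [/eqP ->|]; first exact: ext_refl.
rewrite ltnS => /IH h; apply: ext_trans h _; by case: (hF n (inv_stn n)) => _ [].
Qed.

Lemma agree m n x : (stn m).1 x -> (stn n).1 x -> (stn m).2 x = (stn n).2 x.
Proof.
move=> hm hn; case: (leqP m n) => h.
  by have [_ e] := ext_stn h; rewrite e.
by have [_ e] := ext_stn (ltnW h); rewrite e.
Qed.

Lemma final : exists f, tree_embedding_covering eT eH f v.
Proof.
have: forall x, exists y, exists n, (stn n).1 x /\ (stn n).2 x = y.
  move=> x; have [n gn] := hg x; exists ((stn n.+1).2 x), n.+1; split => //.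
  by rewrite -gn /=; case: (hF n (inv_stn n)) => _ [_ []].
move=> /choice [f hf].
have fE : forall n x, (stn n).1 x -> f x = (stn n).2 x.
  move=> n x hx; have [m [hm <-]] := hf x; exact: agree.
have big : forall m n x y, (stn m).1 x -> (stn n).1 y ->
    (stn (maxn m n)).1 x /\ (stn (maxn m n)).1 y.
  move=> m n x y hx hy; split.
    by apply: (proj1 (ext_stn (leq_maxl m n))).
  by apply: (proj1 (ext_stn (leq_maxr m n))).
exists f; split.
  move=> x y E; have [m [hm _]] := hf x; have [n [hn _]] := hf y.
  have [bx by'] := big _ _ _ _ hm hn.
  have [_ [_ [_ [_ inj]]]] := inv_stn (maxn m n).
  by apply: inj => //; rewrite -!fE.
split.
  move=> x y hxy; have [m [hm _]] := hf x; have [n [hn _]] := hf y.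
  have [bx by'] := big _ _ _ _ hm hn.
  have [_ [_ [_ [cl _]]]] := inv_stn (maxn m n).
  case: (TP hxy) => [[xt ->]|[yt ->]].
    have [Sp e] := cl _ bx xt; apply: hHsym; by rewrite !(fE (maxn m n)).
  have [Sp e] := cl _ by' yt; by rewrite !(fE (maxn m n)).
move=> w hw; have [n gn] := hgh w; subst w.
have [_ [_ [_ c]]] := hF n (inv_stn n).
have [x hx ex] := c hw; exists x => //; by rewrite (fE n.+1).
Qed.

End Constr.
Lemma surj_of_countable T (x0 : T) : countable [set: T] -> exists g : nat -> T, forall x, exists n, g n = x.
Proof.
move=> /countable_injP [code inj].
have: forall n, exists x, (exists y, code y = n) -> code x = n.
  move=> n; case: (pselect (exists y, code y = n)) => [[y hy]|h].
    by exists y.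
  by exists x0.
move=> /choice [g hg]; exists g => x; exists (code x).
apply: inj; rewrite ?in_setT //; apply: hg; by exists x.
Qed.

Theorem mainTheorem13 (VT VH : Type) (eT : VT -> VT -> Prop) (eH : VH -> VH -> Prop)
  (hTcount : countable [set: VT]) (hTtree : is_tree eT)
  (hTinf : exists t : VT, infinite_degree eT t)
  (hHcount : countable [set: VH]) (hHgraph : simple_graph eH)
  (hHinf : forall u : VH, infinite_degree eH u) :
  forall v : VH, exists f : VT -> VH, tree_embedding_covering eT eH f v.
Proof.
move=> v; case: hTinf => t ht.
case: hTtree => [[tsym tirr] [tconn tnc]].
have: forall x, exists n, reach eT t n x /\ forall m, reach eT t m x -> n <= m.
  move=> x; apply: ex_min; have [s [ws ls]] := tconn t x.
  by exists (length s), s.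
move=> /choice [d hd].
have: forall x, exists y, x <> t -> eT y x /\ (d y).+1 = d x.
  move=> x; case: (pselect (x = t)) => [->|xt]; first by exists t.
  have [y hy] := par_ex hd xt; by exists y.
move=> /choice [p hp].
have TPl := TP tsym tirr tnc hd hp.
have hpd : forall x, x <> t -> (d (p x)).+1 = d x by move=> x /hp [].
have hd0 := d0 hd.
have hdt := dt hd.
have [g hg] := @surj_of_countable _ t hTcount.
have [gh hgh] := @surj_of_countable _ v hHcount.
have: forall st, exists Fst : nat -> state VT VH, forall n,
    inv eH t v p st -> inv eH t v p (Fst n) /\ ext st (Fst n) /\ (Fst n).1 (g n) /\
    (eH v (gh n) -> ((Fst n).2 @` (Fst n).1) (gh n)).
  move=> st; have [Fst hFst] := choice (step_ex v TPl hHinf ht hpd hd0 hdt g gh st).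
  by exists Fst.
move=> /choice [F hF].
case: hHgraph => hsym _.
exact: (final TPl hsym (F := fun st n => F st n) (fun st n => hF st n) hg hgh).
Qed.
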